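(* Let $V$ be a finite-dimensional vector space over $k$ with basis $\xi_1,\dots,\xi_n$ and dual basis $\eta_1,\dots,\eta_n$ of $V^*$, and let $\mathfrak a=\mathfrak a(V\oplus V^* )$ be the Weyl Lie algebra. Let $M$ be a vector space, $\mu:\mathfrak a\otimes M\to M$ linear, and let $a:\mathrm{Sym}(V)\otimes M\to\mathrm{Div}(V)\otimes M$ be the corresponding map $a(\xi^\alpha\otimes x)=\sum_\sigma\xi^{[\sigma]}\otimes\mu(\xi^\alpha\eta^\sigma\otimes x)$ (assumed to have finitely many nonzero terms for each $x$). Then $\mu$ defines a representation of the Lie algebra $\mathfrak a$ on $M$ if and only if $[a_1,a_2]=a'-a''$.
   Context: The Weyl algebra $A$ is generated by $\xi_1,\dots,\xi_n,\eta_1,\dots,\eta_n$ with relations $\xi_i\xi_j=\xi_j\xi_i$, $\eta_i\eta_j=\eta_j\eta_i$, $\eta_i\xi_j-\xi_j\eta_i=\delta_{ij}$; the Weyl Lie algebra $\mathfrak a$ is $A$ with the commutator bracket; it has basis the ordered monomials $\xi^\alpha\eta^\sigma=\xi_1^{\alpha_1}\cdots\xi_n^{\alpha_n}\eta_1^{\sigma_1}\cdots\eta_n^{\sigma_n}$ ($\alpha,\sigma\in\mathbb N^n$). $\mathrm{Sym}(V)=k[\xi_1,\dots,\xi_n]$; $\mathrm{Div}(V)$ is the divided power algebra with basis $\xi^{[\sigma]}$, multiplication $\xi^{[\nu]}\xi^{[\mu]}=\binom{\nu+\mu}{\nu}\xi^{[\nu+\mu]}$ and comultiplication $\Delta(\xi^{[\rho]})=\sum_{\nu+\mu=\rho}\xi^{[\nu]}\otimes\xi^{[\mu]}$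 (multi-index binomials are products of coordinatewise ones); on $\mathrm{Sym}(V)$, $m$ is multiplication and $\Delta(\xi^\beta)=\sum_\epsilon\binom{\beta}{\epsilon}\xi^\epsilon\otimes\xi^{\beta-\epsilon}$; $\mathrm{avg}:\mathrm{Sym}(V)\to\mathrm{Div}(V)$, $\xi^\epsilon\mapsto\epsilon!\,\xi^{[\epsilon]}$ with $\epsilon!=\prod\epsilon_i!$. Write $S=\mathrm{Sym}(V)$, $D=\mathrm{Div}(V)$, $\tau$ the symmetry of the first two factors. $a_2=\mathrm{id}_S\otimes a$, $a_1=\tau(\mathrm{id}_S\otimes a)\tau$, and $[a_1,a_2]=a_1a_2-a_2a_1:S\otimes S\otimes M\to D\otimes D\otimes M$. $a'$ is the composite $S\otimes S\otimes M\xrightarrow{\mathrm{id}\otimes\Delta\otimes\mathrm{id}}S^{\otimes3}\otimes M\xrightarrow{\tau\otimes\mathrm{id}\otimes\mathrm{id}}S^{\otimes3}\otimes M\xrightarrow{\mathrm{id}\otimes m\otimes\mathrm{id}}S\otimes S\otimes M\xrightarrow{\mathrm{id}\otimes a}S\otimes D\otimes M\xrightarrow{\mathrm{id}\otimes\Delta\otimes\mathrm{id}}S\otimes D\otimes D\otimes M\xrightarrow{\mathrm{avg}\otimes\mathrm{id}}D^{\otimes3}\otimes M\xrightarrow{m\otimes\mathrm{id}\otimes\mathrm{id}}D\otimes D\otimes M$, and $a''=\tau a'\tau$. A representation means $\mu([X,Y]\otimes x)=\mu(X\otimes\mu(Y\otimes x))-\mu(Y\otimes\mu(X\otimes x))$.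 *)

(* Defs.v *)
From HB Require Import structures.
From mathcomp Require Import all_boot all_order all_algebra.
Set Implicit Arguments. Unset Strict Implicit. Unset Printing Implicit Defensive.
Import Order.TTheory GRing.Theory.
Local Open Scope ring_scope.

(* A multi-index alpha in N^n; xi^alpha, eta^sigma, xi^[sigma] are all
   indexed by such. *)
Definition mono (n : nat) := {ffun 'I_n -> nat}.

Definition madd n (a b : mono n) : mono n := [ffun i => (a i + b i)%N].
Definition msub n (a b : mono n) : mono n := [ffun i => (a i - b i)%N].
Definition mle n (a b : mono n) : bool := [forall i, (a i <= b i)%N].
Definition mfact n (a : mono n) : nat := (\prod_(i < n) (a i)`!)%N.
Definition mbin n (a b : mono n) : nat := (\prod_(i < n) 'C(a i, b i))%N.
Definition msum n (a : mono n) : nat := (\sum_(i < n) a i)%N.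
Definition subm n (b : mono n) : seq (mono n) :=
  map (fun e : {ffun 'I_n -> 'I_(msum b).+1} => [ffun i => nat_of_ord (e i)] : mono n)
      (enum [pred e : {ffun 'I_n -> 'I_(msum b).+1} | [forall i, (e i <= b i)%N]]).

(* An element of (tensor product of factors with basis indexed by I) (x) M
   is represented as a finite formal sum  sum_j (basis_{i_j} (x) m_j),
   i.e. a list of pairs (i_j, m_j).  Two such represent the same element iff
   their coefficient functions [coef] agree. *)
Definition coef (I : eqType) (M : zmodType) (s : seq (I * M)) (i : I) : M :=
  \sum_(p <- s | p.1 == i) p.2.
(* extension to formal sums of a map given on pure tensors  basis_i (x) m *)
Definition lift (I J M : Type) (f : I -> M -> seq (J * M)) (s : seq (I * M)) :
  seq (J * M) := flatten [seq f p.1 p.2 | p <- s].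
Definition fsub (I : Type) (M : zmodType) (s t : seq (I * M)) : seq (I * M) :=
  s ++ [seq (p.1, - p.2) | p <- t].

(* Product of ordered monomials in the Weyl algebra A:
   (xi^al eta^si)(xi^be eta^ta)
     = sum_{e <= si, e <= be} e! C(si,e) C(be,e) xi^(al+be-e) eta^(si+ta-e),
   the normal-ordering formula following from eta_i xi_j - xi_j eta_i = delta_ij. *)
Section Weyl.
Variables (k : fieldType) (n : nat).
Definition wmono := (mono n * mono n)%type.   (* (alpha, sigma) <-> xi^alpha eta^sigma *)
Definition welt := seq (k * wmono).

Definition wprod (m1 m2 : wmono) : welt :=
  [seq ((mfact e * mbin m1.2 e * mbin m2.1 e)%:R,
        (madd m1.1 (msub m2.1 e), madd (msub m1.2 e) m2.2))
  | e <- subm m1.2 & mle e m2.1].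

Definition wbracket (X Y : welt) : welt :=
  flatten [seq [seq (p.1 * q.1 * r.1, r.2) | r <- wprod p.2 q.2] ++
               [seq (- (p.1 * q.1 * r.1), r.2) | r <- wprod q.2 p.2]
          | p <- X, q <- Y].
End Weyl.

Section Rep.
Variables (k : fieldType) (n : nat) (M : lmodType k).
(* mu : a (x) M -> M linear is given by its values mu (xi^al eta^si) : M -> M *)
Variable mu : mono n -> mono n -> {linear M -> M}.

Definition muA (X : welt k n) (x : M) : M := \sum_(p <- X) p.1 *: mu p.2.1 p.2.2 x.

Definition is_representation : Prop :=
  forall (X Y : welt k n) (x : M),
    muA (wbracket X Y) x = muA X (muA Y x) - muA Y (muA X x).

(* supp al x : a finite list containing every sigma with mu(xi^al eta^si (x) x) <> 0
   (exists by the finiteness assumption); used to write a as a finite sum. *)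
Variable supp : mono n -> M -> seq (mono n).

Definition covers_support : Prop :=
  forall (al si : mono n) (x : M), mu al si x != 0 -> si \in supp al x.

Definition a_map (al : mono n) (x : M) : seq (mono n * M) :=
  [seq (si, mu al si x) | si <- undup (supp al x)].

Definition tau_b (i : mono n * mono n) (x : M) : seq ((mono n * mono n) * M) :=
  [:: ((i.2, i.1), x)].
Definition a2_b (i : mono n * mono n) (x : M) : seq ((mono n * mono n) * M) :=
  [seq ((i.1, p.1), p.2) | p <- a_map i.2 x].
Definition a2 := lift a2_b.
Definition a1 (s : seq ((mono n * mono n) * M)) := lift tau_b (a2 (lift tau_b s)).
Definition tau := lift tau_b.

Definition a12 (s : seq ((mono n * mono n) * M)) := fsub (a1 (a2 s)) (a2 (a1 s)).

(* id (x) Delta_Sym (x) id *)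
Definition st1 (i : mono n * mono n) (x : M) : seq ((mono n * mono n * mono n) * M) :=
  [seq (((i.1, e), msub i.2 e), (mbin i.2 e)%:R *: x) | e <- subm i.2].
Definition st2 (i : mono n * mono n * mono n) (x : M) :=
  [:: (((i.1.2, i.1.1), i.2), x)].
(* id (x) m_Sym (x) id *)
Definition st3 (i : mono n * mono n * mono n) (x : M) :=
  [:: ((i.1.1, madd i.1.2 i.2), x)].
Definition st4 := a2_b.
(* id (x) Delta_Div (x) id *)
Definition st5 (i : mono n * mono n) (x : M) : seq ((mono n * mono n * mono n) * M) :=
  [seq (((i.1, e), msub i.2 e), x) | e <- subm i.2].
(* avg (x) id *)
Definition st6 (i : mono n * mono n * mono n) (x : M) :=
  [:: (i, (mfact i.1.1)%:R *: x)].
(* m_Div (x) id (x) id *)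
Definition st7 (i : mono n * mono n * mono n) (x : M) :=
  [:: ((madd i.1.1 i.1.2, i.2), (mbin (madd i.1.1 i.1.2) i.1.1)%:R *: x)].

Definition a' (s : seq ((mono n * mono n) * M)) :=
  lift st7 (lift st6 (lift st5 (lift st4 (lift st3 (lift st2 (lift st1 s)))))).
Definition a'' (s : seq ((mono n * mono n) * M)) := tau (a' (tau s)).

Definition bracket_identity : Prop :=
  forall (s : seq ((mono n * mono n) * M)) (i : mono n * mono n),
    coef (a12 s) i = coef (fsub (a' s) (a'' s)) i.
End Rep.

(* Main.v *)
Require Import Defs.
From HB Require Import structures.
From mathcomp Require Import all_boot all_order all_algebra.
Set Implicit Arguments. Unset Strict Implicit. Unset Printing Implicit Defensive.
Import GRing.Theory.
Local Open Scope ring_scope.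


Lemma sum_pick (T : eqType) (V : zmodType) (s : seq T) (t : T) (F : T -> V) :
  uniq s -> \sum_(u <- s) (if u == t then F u else 0) = if t \in s then F t else 0.
Proof.
move=> us; rewrite -big_mkcond /=.
case: ifP => ts.
  by rewrite -big_filter (filter_pred1_uniq us ts) big_seq1.
rewrite big1_seq // => u /andP[/eqP -> ]; by rewrite ts.
Qed.

Lemma sum_pick_undup (T : eqType) (V : zmodType) (s : seq T) (t : T) (F : T -> V) :
  (F t != 0 -> t \in s) ->
  \sum_(u <- undup s) (if u == t then F u else 0) = F t.
Proof.
move=> h; rewrite sum_pick ?undup_uniq // mem_undup.
case: ifP => // ts; have [->//|nz] := eqVneq (F t) 0; by move: (h nz); rewrite ts.
Qed.

Lemma sum_if_and (T : Type) (V : zmodType) (s : seq T) (P : pred T) (b : bool) (F : T -> V) :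
  \sum_(u <- s) (if P u && b then F u else 0) = if b then \sum_(u <- s) (if P u then F u else 0) else 0.
Proof.
case: b; first by apply: eq_bigr => u _; rewrite andbT.
by rewrite big1 // => u _; rewrite andbF.
Qed.

Lemma mle_msum n (b : mono n) i : (b i <= msum b)%N.
Proof. by rewrite /msum (bigD1 i) //= leq_addr. Qed.

Lemma mem_subm n (b e : mono n) : (e \in subm b) = mle e b.
Proof.
rewrite /subm; apply/mapP/idP.
  move=> [f]; rewrite mem_enum => /forallP hf ->.
  by apply/forallP => i; rewrite ffunE.
move=> /forallP h.
exists [ffun i => inord (e i) : 'I_(msum b).+1].
  rewrite mem_enum; apply/forallP => i; rewrite ffunE inordK //.
  by rewrite ltnS (leq_trans (h i)) // mle_msum.
apply/ffunP => i; rewrite !ffunE inordK //.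
by rewrite ltnS (leq_trans (h i)) // mle_msum.
Qed.

Lemma uniq_subm n (b : mono n) : uniq (subm b).
Proof.
rewrite /subm map_inj_uniq ?enum_uniq //.
move=> f g /ffunP h; apply/ffunP => i; apply: val_inj.
by have := h i; rewrite !ffunE.
Qed.

Lemma lift_cat (I J M : Type) (f : I -> M -> seq (J * M)) s t :
  Defs.lift f (s ++ t) = Defs.lift f s ++ Defs.lift f t.
Proof. by rewrite /Defs.lift map_cat flatten_cat. Qed.

Lemma big_lift (I J M : Type) (V : zmodType) (f : I -> M -> seq (J * M)) s (G : J * M -> V) :
  \sum_(p <- Defs.lift f s) G p = \sum_(q <- s) \sum_(p <- f q.1 q.2) G p.
Proof. by rewrite /Defs.lift big_flatten big_map. Qed.

Lemma coefE (I : eqType) (M : zmodType) (s : seq (I * M)) i :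
  coef s i = \sum_(p <- s) (if p.1 == i then p.2 else 0).
Proof. by rewrite /coef big_mkcond. Qed.

Lemma coef_cat (I : eqType) (M : zmodType) (s t : seq (I * M)) i :
  coef (s ++ t) i = coef s i + coef t i.
Proof. by rewrite /coef big_cat. Qed.

Lemma coef_fsub (I : eqType) (M : zmodType) (s t : seq (I * M)) i :
  coef (fsub s t) i = coef s i - coef t i.
Proof. by rewrite /fsub coef_cat /coef big_map /= sumrN. Qed.

Lemma coef_additive (I J : eqType) (M : zmodType) (F : seq (I * M) -> seq (J * M)) :
  (forall s t, F (s ++ t) = F s ++ F t) -> F [::] = [::] ->
  forall s j, coef (F s) j = \sum_(p <- s) coef (F [:: p]) j.
Proof.
move=> hc h0; elim=> [|p s IH] j; first by rewrite h0 big_nil /coef big_nil.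
by rewrite -cat1s hc coef_cat IH big_cons.
Qed.

Lemma coef_a1a2 (k : fieldType) (n : nat) (M : lmodType k)
  (mu : mono n -> mono n -> {linear M -> M})
  (supp : mono n -> M -> seq (mono n)) :
  covers_support mu supp -> forall al be x ro si,
 coef (a1 mu supp (a2 mu supp [:: ((al,be),x)])) (ro,si) = mu al ro (mu be si x).
Proof.
move=> hc al be x ro si.
rewrite /coef big_mkcond /a1 /a2 !big_lift big_seq1 /= /a2_b /a_map /=.
rewrite /tau_b /=. under eq_bigr do rewrite big_seq1 /= !big_map. under eq_bigr do under eq_bigr do rewrite big_seq1 /= xpair_eqE. 
rewrite !big_map /=.
under eq_bigr do rewrite sum_if_and.
under eq_bigr => j _.
  rewrite (sum_pick_undup (F := fun i0 => mu al i0 (mu be j x))); last first.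
    by move=> h; apply: hc.
  over.
rewrite /= (sum_pick_undup (F := fun j => mu al ro (mu be j x))) //.
move=> h; apply: hc; apply: contraNneq h => ->; by rewrite linear0.
Qed.

Lemma coef_a2a1 (k : fieldType) (n : nat) (M : lmodType k)
  (mu : mono n -> mono n -> {linear M -> M})
  (supp : mono n -> M -> seq (mono n)) :
  covers_support mu supp -> forall al be x ro si,
 coef (a2 mu supp (a1 mu supp [:: ((al,be),x)])) (ro,si) = mu be si (mu al ro x).
Proof.
move=> hc al be x ro si.
rewrite /coef big_mkcond /a1 /a2 !big_lift big_seq1 /= /a2_b /a_map /=.
rewrite /tau_b /=.
rewrite !big_seq1 /= !big_map /=.
under eq_bigr do rewrite big_seq1 /= !big_map /=.
under eq_bigr => i _ do under eq_bigr => j _ do rewrite xpair_eqE andbC.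
under eq_bigr do rewrite sum_if_and.
under eq_bigr => i _.
  rewrite (sum_pick_undup (F := fun j => mu be j (mu al i x))); last first.
    by move=> h; apply: hc.
  over.
rewrite /= (sum_pick_undup (F := fun i => mu be si (mu al i x))) //.
move=> h; apply: hc; apply: contraNneq h => ->; by rewrite linear0.
Qed.

Lemma cond_nu n (e nu tau ro si : mono n) : mle nu tau ->
 ((madd e nu == ro) && (msub tau nu == si)) =
   [&& nu == msub ro e, mle e ro & tau == madd si (msub ro e)].
Proof.
move=> /forallP hnt; apply/idP/idP.
  move=> /andP[/eqP <- /eqP <-]; apply/and3P; split.
  - by apply/eqP/ffunP => i; rewrite !ffunE addKn.
  - by apply/forallP => i; rewrite !ffunE leq_addr.
  - by apply/eqP/ffunP => i; rewrite !ffunE addKn subnK.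
move=> /and3P[/eqP -> /forallP hle /eqP ->]; apply/andP; split.
  by apply/eqP/ffunP => i; rewrite !ffunE subnKC.
by apply/eqP/ffunP => i; rewrite !ffunE addnK.
Qed.

Lemma nu_sum (V : zmodType) n (S : mono n -> seq (mono n))
  (uS : forall b, uniq (S b)) (memS : forall b e, (e \in S b) = mle e b)
  (e t ro si : mono n) (G : mono n -> V) :
 \sum_(v <- S t) (if (madd e v, msub t v) == (ro,si) then G (madd e v) else 0) =
 if (t == madd si (msub ro e)) && mle e ro then G ro else 0.
Proof.
rewrite (eq_big_seq (fun v => if v == msub ro e then
   (if (t == madd si (msub ro e)) && mle e ro then G ro else 0) else 0)).
  rewrite sum_pick // memS; case: ifP => // hn.
  case: ifP => // /andP[/eqP ht _]; move/negbT/negP: hn; rewrite ht; case.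
  by apply/forallP => i; rewrite !ffunE leq_addl.
move=> v; rewrite memS => hv; rewrite xpair_eqE cond_nu //.
case: (v =P msub ro e) => //= ->; rewrite [(_ == _) && _]andbC.
case: ifP => // /andP[hle _]; congr G; move/forallP: hle => hle.
by apply/ffunP => i; rewrite !ffunE subnKC.
Qed.

Lemma coef_a' (k : fieldType) (n : nat) (M : lmodType k)
  (mu : mono n -> mono n -> {linear M -> M})
  (supp : mono n -> M -> seq (mono n)) :
  covers_support mu supp -> forall al be x ro si,
 coef (a' mu supp [:: ((al,be),x)]) (ro,si) = muA mu (@wprod k n (al,ro) (be,si)) x.
Proof.
move=> hc al be x ro si.
rewrite /muA /wprod /a' /st1 /st5.
have := @mem_subm n; have := @uniq_subm n; move: (@subm n) => S uS memS.
rewrite /coef big_mkcond /a' !big_lift big_seq1 /=.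
rewrite /st2 /st3 /st4 /st6 /st7 /a2_b /a_map /=.
under eq_bigr => e _ do rewrite !big_seq1 /= !big_map /=.
under eq_bigr => e _ do under eq_bigr => t _ do rewrite big_map /=.
under eq_bigr => e _ do under eq_bigr => t _ do under eq_bigr => v _ do rewrite !big_seq1 /=.
rewrite !big_map /= big_filter.
under eq_bigr => e _ do under eq_bigr => t _ do
  rewrite (nu_sum uS memS e t ro si
     (fun r => (mbin r e)%:R *: ((mfact e)%:R *: mu (madd al (msub be e)) t ((mbin be e)%:R *: x)))).
under eq_bigr => e _ do rewrite sum_if_and.
under eq_bigr => e _.
  rewrite (sum_pick_undup (F := fun t => (mbin ro e)%:R *: ((mfact e)%:R *:
         mu (madd al (msub be e)) t ((mbin be e)%:R *: x)))); last first.
    move=> h; apply: hc; apply: contraNneq h => ->; by rewrite !scaler0.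
  over.
rewrite -big_mkcond /= -big_filter.
rewrite -[RHS]big_filter (perm_big [seq i <- S ro | mle i be]); last first.
  apply: uniq_perm; rewrite ?filter_uniq // => e.
  by rewrite !mem_filter !memS andbC.
apply: eq_bigr => e _.
rewrite [X in _ *: (_ *: X) = _]linearZ /= !scalerA -!natrM [(_ * mbin ro e)%N]mulnC -mulnA.
have -> // : madd si (msub ro e) = madd (msub ro e) si.
by apply/ffunP => i; rewrite !ffunE addnC.
Qed.

Lemma muA_wbracket (k : fieldType) (n : nat) (M : lmodType k)
  (mu : mono n -> mono n -> {linear M -> M}) (X Y : welt k n) (x : M) :
  muA mu (wbracket X Y) x = \sum_(p <- X) \sum_(q <- Y)
    (p.1 * q.1) *: (muA mu (wprod k p.2 q.2) x - muA mu (wprod k q.2 p.2) x).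
Proof.
rewrite /muA /wbracket big_flatten /= big_allpairs_dep.
apply: eq_bigr => p _; apply: eq_bigr => q _.
rewrite big_cat !big_map /= scalerBr !scaler_sumr -sumrN.
congr (_ + _); apply: eq_bigr => r _; by rewrite ?scaleNr scalerA.
Qed.

Lemma muA_muA (k : fieldType) (n : nat) (M : lmodType k)
  (mu : mono n -> mono n -> {linear M -> M}) (X Y : welt k n) (x : M) :
  muA mu X (muA mu Y x) = \sum_(p <- X) \sum_(q <- Y)
    (p.1 * q.1) *: mu p.2.1 p.2.2 (mu q.2.1 q.2.2 x).
Proof.
rewrite /muA; apply: eq_bigr => p _; rewrite linear_sum scaler_sumr.
by apply: eq_bigr => q _; rewrite linearZ /= scalerA.
Qed.

Definition basisB (k : fieldType) (n : nat) (M : lmodType k)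
  (mu : mono n -> mono n -> {linear M -> M}) :=
  forall al ro be si x, mu al ro (mu be si x) - mu be si (mu al ro x) =
    muA mu (wprod k (al,ro) (be,si)) x - muA mu (wprod k (be,si) (al,ro)) x.

Lemma rep_iff (k : fieldType) (n : nat) (M : lmodType k)
  (mu : mono n -> mono n -> {linear M -> M}) :
  is_representation mu <-> basisB mu.
Proof.
split.
  move=> h al ro be si x.
  have := h [:: (1, (al,ro))] [:: (1, (be,si))] x.
  by rewrite muA_wbracket !muA_muA !big_seq1 /= mul1r !scale1r => ->.
move=> hB X Y x; rewrite muA_wbracket !muA_muA [X in _ - X]exchange_big -sumrB.
apply: eq_bigr => p _; rewrite -sumrB; apply: eq_bigr => q _.
case: p => a [al ro]; case: q => b [be si] /=.
by rewrite [b * a]mulrC -scalerBr hB.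
Qed.

Lemma coef_tau (k : fieldType) (n : nat) (M : lmodType k)
  (s : seq ((mono n * mono n) * M)) ro si :
  coef (tau s) (ro, si) = coef s (si, ro).
Proof.
rewrite /coef /tau big_mkcond big_lift [RHS]big_mkcond; apply: eq_bigr => [[[a b] m]] _.
by rewrite big_seq1 /= !xpair_eqE andbC.
Qed.

Lemma bracket_iff (k : fieldType) (n : nat) (M : lmodType k)
  (mu : mono n -> mono n -> {linear M -> M})
  (supp : mono n -> M -> seq (mono n)) :
  covers_support mu supp -> (bracket_identity mu supp <-> basisB mu).
Proof.
move=> hc; split.
  move=> hb al ro be si x.
  have := hb [:: ((al,be),x)] (ro,si).
  rewrite /a12 /a'' !coef_fsub coef_a1a2 // coef_a2a1 // coef_tau /= coef_a' // coef_a' //.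
move=> hB s [ro si].
have h1 : forall s1 t, a1 mu supp (a2 mu supp (s1 ++ t)) = a1 mu supp (a2 mu supp s1) ++ a1 mu supp (a2 mu supp t).
  by move=> s1 t; rewrite /a1 /a2 !lift_cat.
have h2 : forall s1 t, a2 mu supp (a1 mu supp (s1 ++ t)) = a2 mu supp (a1 mu supp s1) ++ a2 mu supp (a1 mu supp t).
  by move=> s1 t; rewrite /a1 /a2 !lift_cat.
have h3 : forall s1 t, a' mu supp (s1 ++ t) = a' mu supp s1 ++ a' mu supp t.
  by move=> s1 t; rewrite /a' !lift_cat.
have h4 : forall s1 t, tau (a' mu supp (tau (s1 ++ t))) = tau (a' mu supp (tau s1)) ++ tau (a' mu supp (tau t)).
  by move=> s1 t; rewrite /tau /a' !lift_cat.
rewrite /a12 /a'' !coef_fsub (coef_additive h1 erefl) (coef_additive h2 erefl)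
  (coef_additive h3 erefl) (coef_additive h4 erefl).
rewrite -!sumrB; apply: eq_bigr => [[[al be] x]] _.
by rewrite coef_a1a2 // coef_a2a1 // coef_tau /= coef_a' // coef_a' // hB.
Qed.

Theorem proposition7p1 (k : fieldType) (n : nat) (M : lmodType k)
  (mu : mono n -> mono n -> {linear M -> M})
  (supp : mono n -> M -> seq (mono n)) :
  covers_support mu supp ->
  (is_representation mu <-> bracket_identity mu supp).
Proof.
move=> hc; split=> h.
  by apply/(bracket_iff hc); apply/(rep_iff mu).
by apply/(rep_iff mu); apply/(bracket_iff hc).
Qed.
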